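(* Let $u$ be a countable transitive model of $\mathsf{ZF}$ minus Power Set, let $\mathbb P\in u$ be a partial order with ordering $\le^{\mathbb P}$ and least element $0^{\mathbb P}$, and let $I$ be a non-empty ideal on $\mathbb P$. Let $\mathcal M$ be the development model defined below and let $\tilde\in^{\mathcal M}=\{(\sigma,\tau)\in u^{\mathbb P}\times u^{\mathbb P}:\mathcal M\models\Diamond\Box\,\sigma\in^*\tau\}$. Then $\tilde\in^{\mathcal M}$ is well-founded on $u^{\mathbb P}$, and the Mostowski collapse $\mathrm{mos}$ of $\langle u^{\mathbb P},\tilde\in^{\mathcal M}\rangle$, defined by $\tilde\in^{\mathcal M}$-recursion as $\mathrm{mos}(\tau)=\{\mathrm{mos}(\sigma):\sigma\mathrel{\tilde\in}^{\mathcal M}\tau\}$, satisfies $\mathrm{mos}(\tau)=\mathrm{val}_I(\tau)$ for all $\tau\in u^{\mathbb P}$; consequently the collapsed structure $\langle\{\mathrm{mos}(\tau):\tau\in u^{\mathbb P}\},\in\rangle$ equals the forcing extension $u[I]$.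
   Context: A $\mathbb P$-name is (by $\in$-recursion) a set of ordered pairs $\langle\sigma,p\rangle$ with $\sigma$ a $\mathbb P$-name and $p\in\mathbb P$; $u^{\mathbb P}$ is the set of $\mathbb P$-names belonging to $u$. An ideal on $\mathbb P$ is a set $I\subseteq\mathbb P$ that is downward closed ($q\le^{\mathbb P}p\in I\Rightarrow q\in I$) and directed (any two elements of $I$ have a common upper bound in $I$). (This is the reverse of the usual forcing convention: $I$ plays the role of a filter.) By $\in$-recursion, $\mathrm{val}_I(\tau)=\{\mathrm{val}_I(\sigma):\exists q\in I\,\langle\sigma,q\rangle\in\tau\}$, and $u[I]=\langle\{\mathrm{val}_I(\sigma):\sigma\in u^{\mathbb P}\},\in\rangle$. The development model $\mathcal M$: states are the elements of $I$, the accessibility relation is $\le^{\mathbb P}$ restricted to $I$; at every state $s$ the structure has domain $u^{\mathbb P}$ with the (static) relation $\in$, and a dynamic binary relation $\in^*$ interpreted at $s$ by: $x\in^* y$ iff $x,y\in u^{\mathbb P}$ and there is $s'\le^{\mathbb P}s$ with $\langle x,s'\rangle\in y$. Modal semantics: $\Diamond\psi$ holds at $s$ iff $\psi$ holds at some state $t\ge s$, $\Box$ dually, and $\mathcal M\models\psi$ means $\psi$ holds at every state. *)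

(* Defs.v *)
(* Set theory is represented by an abstract ambient universe (V, mem) which is
   assumed to satisfy the (relevant) axioms of ZF; the countable transitive
   model u is an element of V, and "u |= ZF - Power Set" is expressed through
   a first-order satisfaction relation for the language {∈, =}. *)

Set Implicit Arguments.

Section SetTheory.

Variable V : Type.
Variable mem : V -> V -> Prop.

Record ZF_universe : Prop := {
  zf_ext : forall x y, (forall z, mem z x <-> mem z y) -> x = y;
  zf_found : well_founded mem;
  zf_empty : exists e, forall z, ~ mem z e;
  zf_pair : forall a b, exists c, forall z, mem z c <-> (z = a \/ z = b);
  zf_union : forall a, exists c, forall z, mem z c <-> exists y, mem y a /\ mem z y;
  zf_power : forall a, exists c, forall z,
      mem z c <-> (forall w, mem w z -> mem w a);
  zf_infinity : exists a, (exists e, mem e a /\ forall y, ~ mem y e) /\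
      forall x, mem x a -> exists y, mem y a /\
        forall z, mem z y <-> (mem z x \/ z = x);
  zf_sep : forall (A : V -> Prop) a, exists b, forall z, mem z b <-> (mem z a /\ A z);
  zf_repl : forall (R : V -> V -> Prop) a,
      (forall x y y', mem x a -> R x y -> R x y' -> y = y') ->
      exists b, forall y, mem y b <-> exists x, mem x a /\ R x y
}.

Inductive form : Type :=
  | fMem : nat -> nat -> form
  | fEq  : nat -> nat -> form
  | fFalse : form
  | fNeg : form -> form
  | fAnd : form -> form -> form
  | fOr  : form -> form -> form
  | fImp : form -> form -> form
  | fAll : form -> form
  | fEx  : form -> form.

Definition scons (x : V) (env : nat -> V) : nat -> V :=
  fun n => match n with 0 => x | S k => env k end.

Fixpoint sat (u : V) (env : nat -> V) (phi : form) : Prop :=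
  match phi with
  | fMem i j => mem (env i) (env j)
  | fEq i j => env i = env j
  | fFalse => False
  | fNeg p => ~ sat u env p
  | fAnd p q => sat u env p /\ sat u env q
  | fOr p q => sat u env p \/ sat u env q
  | fImp p q => sat u env p -> sat u env q
  | fAll p => forall x, mem x u -> sat u (scons x env) p
  | fEx p => exists x, mem x u /\ sat u (scons x env) p
  end.

Definition env_in (u : V) (env : nat -> V) : Prop := forall i, mem (env i) u.

Definition ZFminus_model (u : V) : Prop :=
  (forall a b, mem a u -> mem b u ->
     (forall x, mem x u -> (mem x a <-> mem x b)) -> a = b) /\
  (forall a, mem a u -> (exists x, mem x u /\ mem x a) ->
     exists x, mem x u /\ mem x a /\ ~ (exists y, mem y u /\ mem y x /\ mem y a)) /\
  (forall a b, mem a u -> mem b u -> exists c, mem c u /\ mem a c /\ mem b c) /\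
  (forall a, mem a u -> exists c, mem c u /\
     forall x y, mem x u -> mem y u -> mem x a -> mem y x -> mem y c) /\
  (exists a, mem a u /\
     (exists e, mem e u /\ mem e a /\ forall y, mem y u -> ~ mem y e) /\
     (forall x, mem x u -> mem x a -> exists y, mem y u /\ mem y a /\
        forall z, mem z u -> (mem z y <-> (mem z x \/ z = x)))) /\
  (forall (phi : form) env, env_in u env -> forall a, mem a u ->
     exists b, mem b u /\ forall x, mem x u ->
       (mem x b <-> (mem x a /\ sat u (scons x env) phi))) /\
  (forall (phi : form) env, env_in u env -> forall a, mem a u ->
     (forall x, mem x u -> mem x a ->
        (exists y, mem y u /\ sat u (scons y (scons x env)) phi) /\
        (forall y y', mem y u -> mem y' u ->
           sat u (scons y (scons x env)) phi ->
           sat u (scons y' (scons x env)) phi -> y = y')) ->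
     exists b, mem b u /\ forall x, mem x u -> mem x a ->
       exists y, mem y u /\ mem y b /\ sat u (scons y (scons x env)) phi).

Definition transitive_set (u : V) : Prop :=
  forall x y, mem x u -> mem y x -> mem y u.

Definition countable_set (u : V) : Prop :=
  exists f : V -> nat, forall x y, mem x u -> mem y u -> f x = f y -> x = y.

Definition is_pair (z a b : V) : Prop :=
  forall w, mem w z <->
    ((forall y, mem y w <-> y = a) \/ (forall y, mem y w <-> (y = a \/ y = b))).

Definition pair_in (a b t : V) : Prop := exists z, mem z t /\ is_pair z a b.

Section Poset.
Variables (Pset leP zeroP : V).

Definition leq (p q : V) : Prop := pair_in p q leP.

Definition partial_order_with_least : Prop :=
  (forall z, mem z leP -> exists p q, mem p Pset /\ mem q Pset /\ is_pair z p q) /\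
  (forall p, mem p Pset -> leq p p) /\
  (forall p q, mem p Pset -> mem q Pset -> leq p q -> leq q p -> p = q) /\
  (forall p q r, mem p Pset -> mem q Pset -> mem r Pset ->
     leq p q -> leq q r -> leq p r) /\
  mem zeroP Pset /\ (forall p, mem p Pset -> leq zeroP p).

Definition ideal (I : V) : Prop :=
  (forall p, mem p I -> mem p Pset) /\
  (forall p q, mem q Pset -> mem p I -> leq q p -> mem q I) /\
  (forall p q, mem p I -> mem q I ->
     exists r, mem r I /\ leq p r /\ leq q r).

Inductive is_name : V -> Prop :=
  | name_intro : forall tau,
      (forall z, mem z tau -> exists sigma p,
          is_name sigma /\ mem p Pset /\ is_pair z sigma p) ->
      is_name tau.

Definition uname (u x : V) : Prop := mem x u /\ is_name x.

Definition is_val (I : V) (val : V -> V) : Prop :=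
  forall tau, is_name tau -> forall x,
    mem x (val tau) <-> exists sigma q, mem q I /\ pair_in sigma q tau /\ x = val sigma.

(* states are elements of I; accessibility is <=^P restricted to I *)
Definition mdia (I : V) (psi : V -> Prop) (s : V) : Prop :=
  exists t, mem t I /\ leq s t /\ psi t.
Definition mbox (I : V) (psi : V -> Prop) (s : V) : Prop :=
  forall t, mem t I -> leq s t -> psi t.
Definition mvalid (I : V) (psi : V -> Prop) : Prop :=
  forall s, mem s I -> psi s.

Definition star_mem (u x y s : V) : Prop :=
  uname u x /\ uname u y /\ exists s', leq s' s /\ pair_in x s' y.

Definition tilde_mem (u I sigma tau : V) : Prop :=
  uname u sigma /\ uname u tau /\
  mvalid I (mdia I (mbox I (star_mem u sigma tau))).

Definition is_mos (u I : V) (mos : V -> V) : Prop :=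
  forall tau, uname u tau -> forall x,
    mem x (mos tau) <-> exists sigma, tilde_mem u I sigma tau /\ x = mos sigma.

End Poset.
End SetTheory.

(* Main.v *)
Require Import Defs.
From Stdlib Require Import Relations Wellfounded ProofIrrelevance FunctionalExtensionality ClassicalEpsilon.

Section Aux.
Variable V : Type.
Variable mem : V -> V -> Prop.
Hypothesis HV : ZF_universe mem.

Lemma singleton_ex a : exists c, forall y, mem y c <-> y = a.
Proof. destruct (zf_pair HV a a) as [c Hc]. exists c. intro y. rewrite Hc. tauto. Qed.

Lemma pair_mem z a b : is_pair mem z a b -> exists w, mem w z /\ mem a w.
Proof.
  intros H. destruct (singleton_ex a) as [w Hw]. exists w. split.
  - apply H. left; exact Hw.
  - apply Hw; reflexivity.
Qed.

Lemma pair_inj z a b c d : is_pair mem z a b -> is_pair mem z c d -> a = c /\ b = d.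
Proof.
 intros H1 H2.
 assert (Eac : a = c).
 { destruct (singleton_ex a) as [w Hw].
   assert (mem w z) by (apply H1; left; exact Hw).
   apply H2 in H. destruct H as [H|H].
   - symmetry; apply Hw, H; reflexivity.
   - symmetry; apply Hw, H; left; reflexivity. }
 subst c. split; [reflexivity|].
 destruct (zf_pair HV a b) as [w Hw].
 assert (mem w z) by (apply H1; right; exact Hw).
 apply H2 in H.
 destruct (zf_pair HV a d) as [w' Hw'].
 assert (mem w' z) by (apply H2; right; exact Hw').
 apply H1 in H0.
 destruct H as [H|H]; destruct H0 as [H0|H0].
 - assert (b = a) by (apply H, Hw; right; reflexivity).
   assert (d = a) by (apply H0, Hw'; right; reflexivity). congruence.
 - assert (b = a) by (apply H, Hw; right; reflexivity).
   assert (Hd: d = a \/ d = b) by (apply H0, Hw'; right; reflexivity). destruct Hd; congruence.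
 - assert (Hb: b = a \/ b = d) by (apply H, Hw; right; reflexivity).
   assert (d = a) by (apply H0, Hw'; right; reflexivity). destruct Hb; congruence.
 - assert (Hb: b = a \/ b = d) by (apply H, Hw; right; reflexivity).
   assert (Hd: d = a \/ d = b) by (apply H0, Hw'; right; reflexivity).
   destruct Hb as [Hb|Hb]; [destruct Hd; congruence| auto].
Qed.

Definition Rt := clos_trans V mem.

Lemma pair_in_lt s q x : pair_in mem s q x -> Rt s x.
Proof.
 intros [z [Hz Hp]]. destruct (@pair_mem _ _ _ Hp) as [w [Hw Hs]].
 eapply t_trans. apply t_step, Hs. eapply t_trans. apply t_step, Hw. apply t_step, Hz.
Qed.

Lemma wfR : well_founded Rt.
Proof. exact (wf_clos_trans V mem (zf_found HV)). Qed.

Variable I : V.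

Lemma b_ex x (rec : forall y, Rt y x -> V) : exists b, forall y, mem y b <->
  exists s q (h : Rt s x), mem q I /\ pair_in mem s q x /\ y = rec s h.
Proof.
 destruct (zf_union HV x) as [a1 Ha1]. destruct (zf_union HV a1) as [a Ha].
 destruct (zf_repl HV (fun s y => exists q (h : Rt s x), mem q I /\ pair_in mem s q x /\ y = rec s h) a) as [b Hb].
 - intros s y y' _ [q [h [_ [_ E]]]] [q' [h' [_ [_ E']]]]. subst. f_equal. apply proof_irrelevance.
 - exists b. intro y. rewrite Hb. split.
   + intros [s [_ H]]. exists s. exact H.
   + intros [s [q [h [Hq [Hp E]]]]]. exists s. split.
     * destruct Hp as [z [Hz Hzp]]. destruct (@pair_mem _ _ _ Hzp) as [w [Hw Hs]].
       apply Ha. exists w. split; [apply Ha1; exists z; auto | exact Hs].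
     * exists q, h. auto.
Qed.

Definition Fv x (rec : forall y, Rt y x -> V) : V :=
  proj1_sig (constructive_indefinite_description _ (b_ex x rec)).
Definition valf : V -> V := Fix wfR (fun _ => V) Fv.

Lemma valf_eq x : valf x = Fv x (fun y _ => valf y).
Proof.
 unfold valf. apply (Fix_eq wfR (fun _ => V) Fv). intros x0 f g Hfg.
 assert (f = g) by (apply functional_extensionality_dep; intro;
   apply functional_extensionality_dep; auto). subst; reflexivity.
Qed.

Lemma valf_spec x y : mem y (valf x) <-> exists s q, mem q I /\ pair_in mem s q x /\ y = valf s.
Proof.
 rewrite valf_eq. unfold Fv. destruct (constructive_indefinite_description _ _) as [b Hb]. simpl.
 rewrite Hb. split.
 - intros [s [q [h H]]]. exists s, q. exact H.
 - intros [s [q [Hq [Hp E]]]]. exists s, q, (@pair_in_lt _ _ _ Hp). auto.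
Qed.
End Aux.
Arguments pair_inj {V mem} HV {z a b c d}.
Arguments pair_mem {V mem} HV {z a b}.
Arguments pair_in_lt {V mem} HV {s q x}.
Arguments wfR {V mem} HV.
Arguments valf {V mem} HV I.
Arguments valf_spec {V mem} HV I x y.

Theorem mainTheorem5 (V : Type) (mem : V -> V -> Prop)
  (HV : ZF_universe mem)
  (u : V) (Hctm : countable_set mem u) (Htr : transitive_set mem u)
  (Hzf : ZFminus_model mem u)
  (Pset leP zeroP : V) (HPu : mem Pset u) (Hleu : mem leP u)
  (HPo : partial_order_with_least mem Pset leP zeroP)
  (I : V) (HI : ideal mem Pset leP I) (HIne : exists p, mem p I) :
  well_founded (tilde_mem mem Pset leP u I) /\
  (exists mos, is_mos mem Pset leP u I mos) /\
  (exists val, is_val mem Pset I val) /\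
  (forall mos val, is_mos mem Pset leP u I mos -> is_val mem Pset I val ->
     (forall tau, uname mem Pset u tau -> mos tau = val tau) /\
     (forall x, (exists tau, uname mem Pset u tau /\ x = mos tau) <->
                (exists sigma, uname mem Pset u sigma /\ x = val sigma))).
Proof.
 destruct HPo as [Hle [Hrefl [_ [Htrans _]]]]. destruct HI as [HIP [HIdown HIdir]].
 assert (leqP : forall p q, leq mem leP p q -> mem p Pset /\ mem q Pset).
 { intros p q [z [Hz Hp]]. destruct (Hle z Hz) as [p' [q' [Hp' [Hq' Hz']]]].
   destruct (pair_inj HV Hp Hz'); subst; auto. }
 assert (Hchild : forall sigma q tau, uname mem Pset u tau -> pair_in mem sigma q tau ->
           uname mem Pset u sigma).
 { intros sigma q tau [Htu Htn] Hp. split.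
   - destruct Hp as [z [Hz Hzp]]. destruct (pair_mem HV Hzp) as [w [Hw Hs]].
     apply (Htr w sigma); auto. apply (Htr z w); auto. apply (Htr tau z); auto.
   - destruct Htn as [t Ht]. destruct Hp as [z [Hz Hzp]].
     destruct (Ht z Hz) as [s' [p [Hs' [_ Hzp']]]].
     destruct (pair_inj HV Hzp Hzp'). subst; auto. }
 assert (Htil : forall sigma tau, tilde_mem mem Pset leP u I sigma tau <->
     uname mem Pset u sigma /\ uname mem Pset u tau /\ exists q, mem q I /\ pair_in mem sigma q tau).
 { intros. split.
   - intros [Hs [Ht Hv]]. split; [auto|split; [auto|]].
     destruct HIne as [s0 Hs0]. destruct (Hv s0 Hs0) as [t [HtI [_ Hb]]].
     destruct (Hb t HtI (Hrefl t (HIP t HtI))) as [_ [_ [s' [Hs't Hp]]]].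
     exists s'. split; auto. apply (HIdown t s'); auto. apply (leqP _ _ Hs't).
   - intros [Hs [Ht [q [Hq Hp]]]]. split; [auto|split; [auto|]].
     intros s HsI. destruct (HIdir s q HsI Hq) as [r [Hr [Hsr Hqr]]].
     exists r. split; [auto|split; [auto|]]. intros t' Ht'I Hrt'.
     split; [auto|split;[auto|]]. exists q. split; auto.
     apply (Htrans q r t'); auto. }
 assert (Hwf : well_founded (tilde_mem mem Pset leP u I)).
 { apply (wf_incl V _ (Rt V mem)); [|exact (wfR HV)].
   intros s t H. apply Htil in H. destruct H as [_ [_ [q [_ Hp]]]]. exact (pair_in_lt HV Hp). }
 assert (Hval : is_val mem Pset I (valf HV I)).
 { intros tau _ x. apply valf_spec. }
 assert (Hmos : is_mos mem Pset leP u I (valf HV I)).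
 { intros tau Htau x. rewrite valf_spec. split.
   - intros [s [q [Hq [Hp E]]]]. exists s. split; auto. apply Htil.
     split; [exact (Hchild _ _ _ Htau Hp)| split; [auto| exists q; auto]].
   - intros [s [Hs E]]. apply Htil in Hs. destruct Hs as [_ [_ [q [Hq Hp]]]]. exists s, q. auto. }
 split; [auto|split; [eauto|split;[eauto|]]].
 intros mos val Hm Hv.
 assert (Heq : forall tau, uname mem Pset u tau -> mos tau = val tau).
 { intro tau. induction tau as [tau IH] using (well_founded_ind (wfR HV)). intros Htau.
   apply (zf_ext HV). intro x. rewrite (Hm tau Htau x), (Hv tau (proj2 Htau) x). split.
   - intros [s [Hs E]]. apply Htil in Hs as Hs'. destruct Hs' as [Hsu [_ [q [Hq Hp]]]].
     exists s, q. split; auto. split; auto. rewrite E. apply IH; auto. exact (pair_in_lt HV Hp).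
   - intros [s [q [Hq [Hp E]]]]. exists s. split.
     + apply Htil. split; [exact (Hchild _ _ _ Htau Hp)| split; [auto| exists q; auto]].
     + rewrite E; symmetry; apply IH; [exact (pair_in_lt HV Hp)| exact (Hchild _ _ _ Htau Hp)]. }
 split; auto. intro x; split; intros [t [Ht E]]; exists t; split; auto; rewrite E; [|symmetry]; auto.
Qed.
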